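(* Let $f:\mathbb{R}^n\to\mathbb{R}$ be a polynomial of degree at most $4$, let $\mu_f$ be its Steklov function, and let $C:=\sum_{i=1}^n\nabla^2 f_{ii}$, where $f_{ii}=\partial^2 f/\partial x_i^2$. Assume the smallest eigenvalue $\lambda_n(C)$ of $C$ is positive, and fix $L>0$. Let $\theta_L:=\min_{x\in B[0,L]}\lambda_n(\nabla^2 f(x))$, where $\lambda_n(\cdot)$ denotes the smallest eigenvalue and $B[0,L]=\{x:\|x\|\le L\}$, and set \[ t_0:=\sqrt{\frac{6|\theta_L|}{\lambda_n(C)}}. \] Then $\mu_f$ is convex over $B[0,L]\times(t_0,+\infty)$, i.e., $\nabla_{xx}\mu_f(x,t)\succeq 0$ for all $(x,t)\in B[0,L]\times(t_0,+\infty)$.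
   Context: The Steklov function of a continuous $f:\mathbb{R}^n\to\mathbb{R}$ is $\mu_f(x,t)=\frac{1}{(2t)^n}\int_{x_n-t}^{x_n+t}\cdots\int_{x_1-t}^{x_1+t} f(\tau)\,d\tau_1\cdots d\tau_n$ for $x\in\mathbb{R}^n$, $t>0$; $\nabla_{xx}\mu_f$ is its Hessian with respect to $x$. For a polynomial of degree at most $4$, $C=\sum_i\nabla^2 f_{ii}$ is a constant symmetric matrix. $\|\cdot\|$ is the Euclidean norm. *)

(* Defs.v *)
From HB Require Import structures.
From mathcomp Require Import all_boot all_order all_algebra.
From mathcomp Require Import all_classical all_reals all_analysis.
Set Implicit Arguments. Unset Strict Implicit. Unset Printing Implicit Defensive.
Import Order.TTheory GRing.Theory Num.Theory.
Import numFieldNormedType.Exports.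
Local Open Scope classical_set_scope.
Local Open Scope ring_scope.

Section Defs.
Variables (R : realType) (n : nat).

Definition basis_vec (i : 'I_n) : 'rV[R]_n := delta_mx 0 i.

Definition eucl_norm (x : 'rV[R]_n) : R := Num.sqrt (\sum_i x 0 i ^+ 2).

Definition poly_deg_le4 (f : 'rV[R]_n -> R) : Prop :=
  exists c : {ffun 'I_n -> 'I_5} -> R,
    (forall m : {ffun 'I_n -> 'I_5}, (4 < \sum_i (m i : nat))%N -> c m = 0) /\
    forall x, f x = \sum_(m : {ffun 'I_n -> 'I_5}) c m * \prod_i x 0 i ^+ m i.

Definition partial2 (i j : 'I_n) (g : 'rV[R]_n -> R) (x : 'rV[R]_n) : R :=
  derive (fun y => derive g y (basis_vec j)) x (basis_vec i).

Definition hessian (g : 'rV[R]_n -> R) (x : 'rV[R]_n) : 'M[R]_n :=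
  \matrix_(i, j) partial2 i j g x.

Definition psd (A : 'M[R]_n) : Prop :=
  forall v : 'rV[R]_n, 0 <= (v *m A *m v^T) 0 0.

Definition smallest_eig (A : 'M[R]_n) (lam : R) : Prop :=
  eigenvalue A lam /\ forall a, eigenvalue A a -> lam <= a.

Definition set_coord (tau : 'rV[R]_n) (k : 'I_n) (u : R) : 'rV[R]_n :=
  \row_j (if j == k then u else tau 0 j).

Fixpoint iter_int (s : seq 'I_n) (f : 'rV[R]_n -> R) (x : 'rV[R]_n) (t : R)
  (tau : 'rV[R]_n) : R :=
  match s with
  | [::] => f tau
  | k :: s' => Rintegral (@lebesgue_measure R) `[x 0 k - t, x 0 k + t]
                 (fun u => iter_int s' f x t (set_coord tau k u))
  end.

(* Steklov function: outermost integral over tau_n, innermost over tau_1 *)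
Definition steklov (f : 'rV[R]_n -> R) (x : 'rV[R]_n) (t : R) : R :=
  ((2 * t) ^+ n)^-1 * iter_int (rev (enum 'I_n)) f x t x.

End Defs.

(* Main.v *)
Require Import Defs.
From HB Require Import structures.
From mathcomp Require Import all_boot all_order all_algebra.
From mathcomp Require Import all_classical all_reals all_analysis.
From mathcomp Require Import ring lra.
Import Order.TTheory GRing.Theory Num.Theory.
Import numFieldNormedType.Exports.
Local Open Scope ring_scope.

Section OneD.
Variable R : realType.

Lemma taylor4 (p : nat -> R -> R) (c c' : R) :
  (forall j u, is_derive u (1:R) (p j) (p j.+1 u)) ->
  (forall u, p 5%N u = 0) ->
  p 0%N c' = p 0%N c + p 1%N c * (c' - c) + p 2%N c * (c' - c) ^+ 2 / 2
     + p 3%N c * (c' - c) ^+ 3 / 6 + p 4%N c * (c' - c) ^+ 4 / 24.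
Proof.
move=> hd h5.
pose q : R -> R := cst c' - id.
have hq : forall u, is_derive u (1:R) q (-1).
  move=> u; eapply is_derive_eq; rewrite /q.
    exact: is_deriveB.
  by rewrite sub0r.
pose E : R -> R := p 0%N + p 1%N * q + (2^-1 : R) \*: (p 2%N * q ^+ 2) +
   (6^-1 : R) \*: (p 3%N * q ^+ 3) + (24^-1 : R) \*: (p 4%N * q ^+ 4).
have hE : forall u, is_derive u (1:R) E 0.
  move=> u; apply: is_derive_eq.
  rewrite /E.
  rewrite h5 /q !fctE /=.
  rewrite /GRing.scale /=.
  by field.
have H := is_derive_0_is_cst c' c hE.
rewrite /E /q !fctE /= /GRing.scale /= subrr !expr0n /= !mulr0 !addr0 in H.
by rewrite H; field.
Qed.

Lemma avg_int (p : nat -> R -> R) (c t : R) : 0 < t ->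
  (forall j u, is_derive u (1:R) (p j) (p j.+1 u)) ->
  (forall u, p 5%N u = 0) ->
  Rintegral (@lebesgue_measure R) `[c - t, c + t] (p 0%N) =
  2 * t * (p 0%N c + t ^+ 2 / 6 * p 2%N c + t ^+ 4 / 120 * p 4%N c).
Proof.
move=> t0 hd h5.
pose r : R -> R := id - cst c.
have hr : forall u, is_derive u (1:R) r 1.
  move=> u; eapply is_derive_eq; rewrite /r.
    exact: is_deriveB.
  by rewrite subr0.
pose F : R -> R := p 0%N c \*: r + (p 1%N c / 2) \*: r ^+ 2 + (p 2%N c / 6) \*: r ^+ 3
   + (p 3%N c / 24) \*: r ^+ 4 + (p 4%N c / 120) \*: r ^+ 5.
have hF : forall u, is_derive u (1:R) F (p 0%N u).
  move=> u; apply: is_derive_eq.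
  rewrite (@taylor4 p c u hd h5) /r !fctE /= /GRing.scale /=.
  by field.
have dF : forall u, derivable F u 1 by move=> u; exact: ex_derive.
have d0 : forall u, derivable (p 0%N) u 1 by move=> u; exact: ex_derive.
have cF : forall u, (F @ u --> F u)%classic.
  move=> u; apply: differentiable_continuous; exact/derivable1_diffP.
rewrite /Rintegral (continuous_FTC2 (F := F)).
- rewrite /F /r !fctE /= /GRing.scale /=.
  by field.
- by rewrite ltrD2l gt0_cp.
- apply: derivable_within_continuous => x _; exact: d0.
- split.
  + by move=> x _; exact: dF.
  + exact/cvg_at_right_filter/cF.
  + exact/cvg_at_left_filter/cF.
- by move=> x _; rewrite derive1E derive_val.
Qed.
End OneD.

Section Poly.
Variables (R : realType) (n : nat).
Notation V := 'rV[R]_n.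

Definition Dv (v : V) (g : V -> R) : V -> R := fun y => derive g y v.

Inductive polyf : nat -> (V -> R) -> Prop :=
| PolyC d (c : R) : polyf d (fun _ => c)
| PolyX d (i : 'I_n) : (0 < d)%N -> polyf d (fun y => y 0 i)
| PolyD d g h : polyf d g -> polyf d h -> polyf d (fun y => g y + h y)
| PolyM d1 d2 d g h : polyf d1 g -> polyf d2 h -> (d1 + d2 <= d)%N ->
    polyf d (fun y => g y * h y).
Arguments PolyM {d1 d2 d g h}.
Arguments PolyD {d g h}.

Lemma polyf_le {d d' g} : polyf d g -> (d <= d')%N -> polyf d' g.
Proof.
move=> P; elim: P d' => {d g}.
- by move=> d c d' _; exact: PolyC.
- by move=> d i d0 d' dd'; apply: PolyX; exact: leq_trans dd'.
- by move=> d g h _ IHg _ IHh d' dd'; apply: PolyD; [exact: IHg|exact: IHh].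
- move=> d1 d2 d g h Pg _ Ph _ hd d' dd'; apply: PolyM Pg Ph _.
  exact: leq_trans dd'.
Qed.

Lemma polyf0 g : polyf 0 g -> exists c, g = fun _ => c.
Proof.
suff H : forall d g, polyf d g -> d = 0%N -> exists c, g = fun _ => c.
  by move=> P; exact: H P erefl.
move=> {g} d g P; elim: P => {d g}.
- by move=> d c _; exists c.
- by move=> d i d0 e; rewrite e in d0.
- move=> d g h _ IHg _ IHh e.
  have [cg ->] := IHg e; have [ch ->] := IHh e.
  by exists (cg + ch).
- move=> d1 d2 d g h _ IHg _ IHh hd e.
  move: hd; rewrite e leqn0 addn_eq0 => /andP[/eqP e1 /eqP e2].
  have [cg ->] := IHg e1; have [ch ->] := IHh e2.
  by exists (cg * ch).
Qed.

Lemma is_derive_coord (i : 'I_n) (x v : V) :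
  is_derive x v (fun y : V => y 0 i) (v 0 i).
Proof.
have hc : ((fun h : R => h^-1 *: (((fun y : V => y 0 i) \o shift x) (h *: v)
      - x 0 i)) @ 0^' --> v 0 i)%classic.
  apply: cvg_near_cst; near=> h.
  rewrite /= !mxE /GRing.scale /= addrK mulrA mulVf ?mul1r //.
  by near: h; exact: nbhs_dnbhs_neq.
apply: DeriveDef; first by apply/cvg_ex; exists (v 0 i).
exact: cvg_lim hc.
Unshelve. all: by end_near. Qed.

Lemma polyf_deriv {d g} : polyf d g -> forall v : V,
  (forall x, derivable g x v) /\ polyf d.-1 (Dv v g) /\
  (d = 0%N -> forall x, Dv v g x = 0).
Proof.
move=> P v; elim: P => {d g}.
- move=> d c; split; first by move=> x; exact: derivable_cst.
  have E : Dv v (fun _ => c) = fun _ => 0.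
    by apply/funext => x; rewrite /Dv (derive_cst c).
  by rewrite E; split=> //; exact: PolyC.
- move=> d i d0; split; first by move=> x; case: (is_derive_coord i x v).
  have E : Dv v (fun y => y 0 i) = fun _ => v 0 i.
    by apply/funext => x; rewrite /Dv; case: (is_derive_coord i x v).
  rewrite E; split; first exact: PolyC.
  by move=> e; rewrite e in d0.
- move=> d g h _ [dg [Pg zg]] _ [dh [Ph zh]].
  have E : Dv v (fun y => g y + h y) = fun y => Dv v g y + Dv v h y.
    apply/funext => x; rewrite /Dv.
    have -> : (fun y => g y + h y) = g + h by apply/funext.
    by rewrite deriveD.
  split. move=> x; have -> : (fun y => g y + h y) = g + h by apply/funext.
    exact: derivableD.
  rewrite E; split; first exact: PolyD.
  by move=> e x; rewrite zg // zh // addr0.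
- move=> d1 d2 d g h Pg0 [dg [Pg zg]] Ph0 [dh [Ph zh]] hd.
  have E : Dv v (fun y => g y * h y) = fun y => g y * Dv v h y + h y * Dv v g y.
    apply/funext => x; rewrite /Dv.
    have -> : (fun y => g y * h y) = g * h by apply/funext.
    by rewrite deriveM.
  split. move=> x; have -> : (fun y => g y * h y) = g * h by apply/funext.
    exact: derivableM.
  rewrite E; split; last first.
    move=> e x; move: hd; rewrite e leqn0 addn_eq0 => /andP[/eqP e1 /eqP e2].
    by rewrite zg // zh // !mulr0 addr0.
  apply: PolyD.
  + case: d2 Pg0 Ph0 Ph zh hd => [|d2] Pg0 Ph0 Ph zh hd.
      have -> : (fun y => g y * Dv v h y) = fun _ => 0.
        by apply/funext => y; rewrite zh // mulr0.
      exact: PolyC.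
    apply: PolyM Pg0 Ph _ => /=.
    by move: hd; rewrite addnS; case: d.
  + case: d1 Pg0 Ph0 Pg zg hd => [|d1] Pg0 Ph0 Pg zg hd.
      have -> : (fun y => h y * Dv v g y) = fun _ => 0.
        by apply/funext => y; rewrite zg // mulr0.
      exact: PolyC.
    apply: PolyM Ph0 Pg _ => /=.
    by move: hd; rewrite addSn addnC; case: d.
Qed.


Lemma polyf_der {d g} v x : polyf d g -> derivable g x v.
Proof. by move=> P; have [H _] := polyf_deriv P v; exact: H. Qed.

Lemma polyf_Dv {d g} v : polyf d g -> polyf d.-1 (Dv v g).
Proof. by move=> P; have [_ [H _]] := polyf_deriv P v. Qed.

Lemma polyf_Dv0 {g} v : polyf 0 g -> Dv v g = fun _ => 0.
Proof. by move=> P; have [_ [_ H]] := polyf_deriv P v; apply/funext => x; exact: H. Qed.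

Lemma DvC v (c : R) : Dv v (fun _ => c) = fun _ => 0.
Proof. by apply/funext => x; rewrite /Dv (derive_cst c). Qed.

Lemma DvD {d1 d2 g h} v : polyf d1 g -> polyf d2 h ->
  Dv v (fun y => g y + h y) = fun y => Dv v g y + Dv v h y.
Proof.
move=> Pg Ph; apply/funext => x; rewrite /Dv.
have -> : (fun y => g y + h y) = g + h by apply/funext.
by rewrite deriveD //; [exact: polyf_der Pg|exact: polyf_der Ph].
Qed.

Lemma DvM {d1 d2 g h} v : polyf d1 g -> polyf d2 h ->
  Dv v (fun y => g y * h y) = fun y => g y * Dv v h y + h y * Dv v g y.
Proof.
move=> Pg Ph; apply/funext => x; rewrite /Dv.
have -> : (fun y => g y * h y) = g * h by apply/funext.
by rewrite deriveM //; [exact: polyf_der Pg|exact: polyf_der Ph].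
Qed.

Lemma polyf_lin {d g h} (a b c : R) : polyf d g -> polyf d h ->
  polyf d (fun y => a * g y + b * h y + c).
Proof.
move=> Pg Ph; apply: PolyD; last exact: PolyC.
apply: PolyD; [exact: (PolyM (PolyC 0%N a) Pg (leqnn d))|exact: (PolyM (PolyC 0%N b) Ph (leqnn d))].
Qed.

Lemma DvL {d g h} v (a b c : R) : polyf d g -> polyf d h ->
  Dv v (fun y => a * g y + b * h y + c) = fun y => a * Dv v g y + b * Dv v h y + 0.
Proof.
move=> Pg Ph.
have Pa : polyf d (fun y => a * g y) := PolyM (PolyC 0%N a) Pg (leqnn d).
have Pb : polyf d (fun y => b * h y) := PolyM (PolyC 0%N b) Ph (leqnn d).
rewrite (DvD _ (PolyD Pa Pb) (PolyC 0%N c)) (DvD _ Pa Pb).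
rewrite (DvM _ (PolyC 0%N a) Pg) (DvM _ (PolyC 0%N b) Ph) !DvC.
by apply/funext => y; rewrite !mulr0 !addr0.
Qed.

Lemma polyf_iter {d g} v j : polyf d g -> polyf (d - j) (iter j (Dv v) g).
Proof.
move=> P; elim: j => [|j IH]; first by rewrite subn0.
by rewrite subnS /=; exact: polyf_Dv.
Qed.

Lemma Dv_comm {d g} v w : polyf d g -> Dv v (Dv w g) = Dv w (Dv v g).
Proof.
elim => {d g}.
- by move=> d c; rewrite !DvC.
- move=> d i _; have E : forall u, Dv u (fun y : V => y 0 i) = fun _ => u 0 i.
    by move=> u; apply/funext => x; rewrite /Dv; case: (is_derive_coord i x u).
  by rewrite !E !DvC.
- move=> d g h Pg IHg Ph IHh.
  rewrite (DvD _ Pg Ph) (DvD _ Pg Ph).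
  rewrite (DvD _ (polyf_Dv w Pg) (polyf_Dv w Ph)).
  rewrite (DvD _ (polyf_Dv v Pg) (polyf_Dv v Ph)).
  by rewrite IHg IHh.
- move=> d1 d2 d g h Pg IHg Ph IHh _.
  rewrite (DvM _ Pg Ph) (DvM _ Pg Ph).
  rewrite (DvD _ (PolyM Pg (polyf_Dv w Ph) (leqnn _)) (PolyM Ph (polyf_Dv w Pg) (leqnn _))).
  rewrite (DvD _ (PolyM Pg (polyf_Dv v Ph) (leqnn _)) (PolyM Ph (polyf_Dv v Pg) (leqnn _))).
  rewrite (DvM _ Pg (polyf_Dv w Ph)) (DvM _ Ph (polyf_Dv w Pg)).
  rewrite (DvM _ Pg (polyf_Dv v Ph)) (DvM _ Ph (polyf_Dv v Pg)).
  rewrite IHg IHh; apply/funext => y. ring.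
Qed.


Lemma set_coord_shift (s : V) k (h u : R) :
  set_coord s k (h *: (1:R) + u) = h *: basis_vec R k + set_coord s k u.
Proof.
apply/rowP => j; rewrite /basis_vec !mxE eqxx /=.
by case: (j == k) => /=; rewrite /GRing.scale /= ?mulr1 ?mulr0 ?add0r.
Qed.

Lemma is_derive_line (G : V -> R) k (s : V) (u : R) :
  (forall y, derivable G y (basis_vec R k)) ->
  is_derive u (1:R) (fun u => G (set_coord s k u))
    (Dv (basis_vec R k) G (set_coord s k u)).
Proof.
move=> dG.
have E : (fun h : R => h^-1 *: (((fun u => G (set_coord s k u)) \o shift u) (h *: (1:R))
            - G (set_coord s k u))) =
         (fun h : R => h^-1 *: ((G \o shift (set_coord s k u)) (h *: basis_vec R k)
            - G (set_coord s k u))).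
  by apply/funext => h /=; rewrite set_coord_shift.
apply: DeriveDef.
  by rewrite /derivable E; exact: dG.
by rewrite /derive E.
Qed.


End Poly.
Arguments Dv {R n}. Arguments polyf {R n}.
Arguments PolyC {R n}. Arguments PolyX {R n}. Arguments PolyD {R n d g h}. Arguments PolyM {R n d1 d2 d g h}.
Arguments polyf_le {R n d d' g}. Arguments polyf0 {R n}. Arguments is_derive_coord {R n}.
Arguments polyf_deriv {R n d g}. Arguments polyf_der {R n d g}. Arguments polyf_Dv {R n d g}.
Arguments polyf_Dv0 {R n g}. Arguments DvC {R n}. Arguments DvD {R n d1 d2 g h}. Arguments DvM {R n d1 d2 g h}.
Arguments polyf_lin {R n d g h}. Arguments DvL {R n d g h}. Arguments polyf_iter {R n d g}.
Arguments Dv_comm {R n d g}. Arguments set_coord_shift {R n}. Arguments is_derive_line {R n}.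



Section Iter.
Variables (R : realType) (n : nat).
Notation V := 'rV[R]_n.
Notation e := (basis_vec R).

Lemma avg_line (G : V -> R) k (s : V) (c t : R) : 0 < t -> polyf 4 G ->
  Rintegral (@lebesgue_measure R) `[c - t, c + t] (fun u => G (set_coord s k u)) =
  2 * t * (G (set_coord s k c) + t ^+ 2 / 6 * iter 2 (Dv (e k)) G (set_coord s k c)
     + t ^+ 4 / 120 * iter 4 (Dv (e k)) G (set_coord s k c)).
Proof.
move=> t0 PG.
pose p j u := iter j (Dv (e k)) G (set_coord s k u).
have hd : forall j u, is_derive u (1:R) (p j) (p j.+1 u).
  move=> j u; rewrite /p /=; apply: is_derive_line => y.
  exact: polyf_der (polyf_iter _ j PG).
have h5 : forall u, p 5%N u = 0.
  move=> u; rewrite /p /=.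
  have P4 := polyf_iter (e k) 4 PG; rewrite subnn in P4.
  by rewrite (polyf_Dv0 _ P4).
exact: (@avg_int R p c t t0 hd h5).
Qed.


Definition upd (s : seq 'I_n) (x tau : V) : V :=
  \row_j (if j \in s then x 0 j else tau 0 j).

Lemma upd_nil x tau : upd [::] x tau = tau.
Proof. by apply/rowP => j; rewrite !mxE in_nil; congr (tau _ _); apply/val_inj; case: (0 : 'I_1) => -[]. Qed.

Lemma upd_same s x : upd s x x = x.
Proof. by apply/rowP => j; rewrite !mxE; case: ifP => _; congr (x _ _); apply/val_inj; case: (0 : 'I_1) => -[]. Qed.

Lemma upd_set s x tau k u : k \notin s ->
  upd s x (set_coord tau k u) = set_coord (upd s x tau) k u.
Proof.
move=> ks; apply/rowP => j; rewrite !mxE.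
case: ifP => js; case: eqP => // jk.
by rewrite -jk js in ks.


Qed.

Lemma upd_cons s x tau k :
  set_coord (upd s x tau) k (x 0 k) = upd (k :: s) x tau.
Proof.
apply/rowP => j; rewrite !mxE in_cons.
by case: eqP => [->|] //=.
Qed.

Lemma polyf_sum d (s : seq 'I_n) (F : 'I_n -> V -> R) :
  (forall k, polyf d (F k)) -> polyf d (fun y => \sum_(k <- s) F k y).
Proof.
move=> PF; elim: s => [|a s IH].
  have -> : (fun y : V => \sum_(k <- [::]) F k y) = fun _ => 0.
    by apply/funext => y; rewrite big_nil.
  exact: PolyC.
have -> : (fun y : V => \sum_(k <- a :: s) F k y) =
    fun y => F a y + \sum_(k <- s) F k y.
  by apply/funext => y; rewrite big_cons.
exact: PolyD.
Qed.

Lemma iterL {d} {g h : V -> R} v (a b c : R) j : polyf d g -> polyf d h ->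
  iter j.+1 (Dv v) (fun y => a * g y + b * h y + c) =
  fun y => a * iter j.+1 (Dv v) g y + b * iter j.+1 (Dv v) h y + 0.
Proof.
move=> Pg Ph; elim: j => [|j IH]; first exact: (DvL v a b c Pg Ph).
rewrite [LHS]iterS IH.
exact: (DvL v a b 0 (polyf_iter v j.+1 Pg) (polyf_iter v j.+1 Ph)).
Qed.

Lemma iter_int_cons k s (f : V -> R) (x : V) t tau :
  iter_int (k :: s) f x t tau = Rintegral (@lebesgue_measure R) `[x 0 k - t, x 0 k + t]
                 (fun u => iter_int s f x t (set_coord tau k u)).
Proof. by []. Qed.

Lemma iter_int_formula (t : R) (s : seq 'I_n) : 0 < t -> uniq s ->
  forall g, polyf 4 g -> exists c : R, forall x tau,
  iter_int s g x t tau = (2 * t) ^+ (size s) *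
    (g (upd s x tau) + t ^+ 2 / 6 *
       \sum_(k <- s) iter 2 (Dv (e k)) g (upd s x tau) + c).
Proof.
move=> t0; elim: s => [|k s IH].
  move=> _ g Pg; exists 0 => x tau; rewrite /=.
  by rewrite upd_nil big_nil expr0 mul1r mulr0 !addr0.
move=> /andP[ks us] g Pg.
have [c' H] := IH us g Pg.
set a := (2 * t) ^+ size s; set b := t ^+ 2 / 6.
pose S' := fun y => \sum_(k' <- s) iter 2 (Dv (e k')) g y.
have PS : polyf 2 S'.
  apply: polyf_sum => k'; exact: (polyf_iter (e k') 2 Pg).
pose G := fun y => a * g y + (a * b) * S' y + a * c'.
have PG : polyf 4 G := polyf_lin a (a * b) (a * c') Pg (polyf_le (d':=4) PS isT).
have D2 := iterL (e k) a (a * b) (a * c') 1 Pg (polyf_le (d':=4) PS isT).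
have D4 := iterL (e k) a (a * b) (a * c') 3 Pg (polyf_le (d':=4) PS isT).
have [k1 hk1] := polyf0 _ (polyf_iter (e k) 2 PS).
have [k2 hk2] := polyf0 _ (polyf_iter (e k) 4 Pg).
have hS4 : iter 4 (Dv (e k)) S' = fun _ => 0.
  by rewrite iterS; exact: (polyf_Dv0 _ (polyf_iter (e k) 3 PS)).
rewrite hk1 hS4 hk2 in D2 D4; rewrite -/G in D2 D4.
exists (c' + b * b * k1 + t ^+ 4 / 120 * k2) => x tau.
rewrite iter_int_cons.
have -> : (fun u => iter_int s g x t (set_coord tau k u)) =
    (fun u => G (set_coord (upd s x tau) k u)).
  apply/funext => u; rewrite H upd_set // /G /S'.
  by rewrite /a /b; ring.
rewrite avg_line // D2 D4 upd_cons big_cons (exprS (2 * t) (size s)) /G /S' -/a.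
by rewrite /b; ring.
Qed.

End Iter.
Arguments upd {R n}. Arguments polyf_sum {R n d}. Arguments iter_int_formula {R n}.
Arguments avg_line {R n}. Arguments iterL {R n d g h}.



Section Spec.
Variables (R : realType) (n : nat).
Notation V := 'rV[R]_n.

Lemma polyf_cont d (g : V -> R) : polyf d g -> continuous g.
Proof.
elim => {d g}.
- by move=> d c x; exact: cst_continuous.
- by move=> d i _; exact: coord_continuous.
- move=> d g h _ cg _ ch x.
  have -> : (fun y => g y + h y) = g + h by apply/funext.
  exact: (continuousD (cg x) (ch x)).
- move=> d1 d2 d g h _ cg _ ch _ x.
  exact: (continuousM (cg x) (ch x)).
Qed.

Definition qf (A : 'M[R]_n) (w : V) : R := (w *m A *m w^T) 0 0.
Definition nr (w : V) : R := qf 1%:M w.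

Lemma qfE A w : qf A w = \sum_k (\sum_j w 0 j * A j k) * w 0 k.
Proof. by rewrite /qf mxE; apply: eq_bigr => k _; rewrite !mxE. Qed.

Lemma nrE w : nr w = \sum_k w 0 k ^+ 2.
Proof. by rewrite /nr /qf mulmx1 mxE; apply: eq_bigr => k _; rewrite !mxE expr2. Qed.

Lemma nr_ge0 w : 0 <= nr w.
Proof. by rewrite nrE; apply: sumr_ge0 => k _; exact: sqr_ge0. Qed.

Lemma nr_eq0 w : nr w = 0 -> w = 0.
Proof.
rewrite nrE => /eqP; rewrite psumr_eq0 => [/allP H|k _]; last exact: sqr_ge0.
apply/rowP => k; rewrite mxE.
have := H k (mem_index_enum k); rewrite /= sqrf_eq0 => /eqP.
by case: (0 : 'I_1) => -[] // ? ->.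
Qed.

Lemma qf0 A : qf A 0 = 0.
Proof. by rewrite /qf !mul0mx mxE. Qed.

Lemma qfZ A s w : qf A (s *: w) = s ^+ 2 * qf A w.
Proof.
rewrite /qf -scalemxAl linearZ /= -scalemxAr !mxE.
by rewrite mulr_sumr [in RHS]mulr_sumr; apply: eq_bigr => j _; rewrite mxE; ring.
Qed.

Lemma qf_cont A : continuous (qf A).
Proof.
have -> : qf A = fun w => \sum_k (\sum_j w 0 j * A j k) * w 0 k.
  by apply/funext => w; exact: qfE.
apply: (@polyf_cont 2).
apply: polyf_sum => k; apply: (PolyM (d1:=1) (d2:=1)) => //.
  apply: polyf_sum => j; apply: (PolyM (d1:=1) (d2:=0)) => //.
    exact: PolyX.
  exact: PolyC.
exact: PolyX.
Qed.

Lemma qfD A (sym : A^T = A) m w s :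
  qf A (m + s *: w) = qf A m + 2 * s * (m *m A *m w^T) 0 0 + s ^+ 2 * qf A w.
Proof.
have addE : forall X Y : 'M[R]_1, (X + Y) 0 0 = X 0 0 + Y 0 0 by move=> X Y; rewrite mxE.
have sclE : forall (c : R) (X : 'M[R]_1), (c *: X) 0 0 = c * X 0 0 by move=> c X; rewrite mxE.
have E : (w *m A *m m^T) 0 0 = (m *m A *m w^T) 0 0.
  have -> : w *m A *m m^T = (m *m A *m w^T)^T.
    by rewrite !trmx_mul trmxK sym mulmxA.
  by rewrite mxE.
rewrite /qf mulmxDl (_ : (m + s *: w)^T = m^T + (s *: w)^T); last exact: linearD.
rewrite !mulmxDr !mulmxDl.
rewrite (_ : (s *: w)^T = s *: w^T); last exact: linearZ.
rewrite -!scalemxAr -!scalemxAl !addE !sclE E.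
by ring.
Qed.

Lemma spec A th : A^T = A -> (forall a, eigenvalue A a -> th <= a) ->
  forall v, th * nr v <= qf A v.
Proof.
move=> sym hth v.
have [->|v0] := eqVneq v 0; first by rewrite /nr !qf0 mulr0.
have nr0 : forall w, w != 0 -> nr w != 0.
  by move=> w w0; apply/eqP => /nr_eq0 /eqP; rewrite (negbTE w0).
have norm1 : forall w, w != 0 -> nr ((Num.sqrt (nr w))^-1 *: w) = 1.
  move=> w w0; rewrite /nr qfZ -/(nr w) exprVn sqr_sqrtr ?nr_ge0 // mulVf //.
  exact: nr0.
pose S := [set w : V | nr w = 1]%classic.
have S0 : (S !=set0)%classic by exists ((Num.sqrt (nr v))^-1 *: v); exact: norm1.
have cS : compact S.
  apply: bounded_closed_compact.
  - exists 1; split; first exact: num_real.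
    move=> M M1 w Sw /=.
    rewrite [leLHS]/Num.Def.normr /= mx_normrE; apply: bigmax_le; first by rewrite ltW // (lt_trans ltr01).
    move=> [i j] _ /=; rewrite ord1.
    apply: le_trans (ltW M1).
    have : w 0 j ^+ 2 <= 1.
      rewrite -Sw nrE (bigD1 j) //= lerDl; apply: sumr_ge0 => k _; exact: sqr_ge0.
    by rewrite ler_norml => h; apply/andP; split; nra.
  - exact: ((continuous_closedP nr).1 (qf_cont 1%:M) _ (@closed_eq R 1)).
have cq : {within S, continuous (qf A)}%classic by apply: continuous_subspaceT; exact: qf_cont.
have [m Sm mmin] := EVT_min_rV S0 cS cq.
have {}Sm : nr m = 1 by move: Sm; rewrite inE.
have {}mmin : forall w, nr w = 1 -> qf A m <= qf A w.
  by move=> w Sw; apply: mmin; rewrite inE.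
set mu := qf A m.
have h1 : forall w, mu * nr w <= qf A w.
  move=> w; have [->|w0] := eqVneq w 0; first by rewrite /nr !qf0 mulr0.
  have := mmin _ (norm1 w w0); rewrite qfZ exprVn sqr_sqrtr ?nr_ge0 //.
  have nrp : 0 < nr w by rewrite lt0r nr0 // nr_ge0.
  by rewrite mulrC ler_pdivlMr.
pose B := A - mu%:M.
have symB : B^T = B by rewrite /B linearB /= sym tr_scalar_mx.
have qfB : forall w, qf B w = qf A w - mu * nr w.
  move=> w; rewrite /qf /nr /qf /B mulmxBr mulmxBl mul_mx_scalar mulmx1 -scalemxAl.
  by rewrite !mxE.
have hB : forall w, 0 <= qf B w by move=> w; rewrite qfB subr_ge0.
have hBm : qf B m = 0 by rewrite qfB Sm mulr1 subrr.
have h2 : forall w : V, (m *m B *m w^T) 0 0 = 0.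
  move=> w; set be := (m *m B *m w^T) 0 0; set ga := qf B w.
  have ga0 : 0 <= ga := hB w.
  have := hB (m + (- be / (ga + 1)) *: w); rewrite qfD // hBm add0r -/ga -/be.
  have g1 : ga + 1 != 0 by rewrite gt_eqF // ltr_wpDl.
  have -> : 2 * (- be / (ga + 1)) * be + (- be / (ga + 1)) ^+ 2 * ga =
      - (be ^+ 2 * (ga + 2)) / (ga + 1) ^+ 2 by field.
  rewrite pmulr_lge0 ?invr_gt0 ?exprn_gt0 ?ltr_wpDl //.
  rewrite oppr_ge0 => h.
  have hb2 : be ^+ 2 <= 0 by nra.
  by apply/eqP; rewrite -sqrf_eq0 eq_le hb2 sqr_ge0.
have mB0 : m *m B = 0.
  by apply: nr_eq0; rewrite /nr /qf mulmx1; exact: h2.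
have meig : m *m A = mu *: m.
  by move: mB0; rewrite /B mulmxBr mul_mx_scalar => /eqP; rewrite subr_eq0 => /eqP.
have m0 : m != 0.
  by apply/eqP => m0; move: Sm; rewrite m0 /nr qf0 => /eqP; rewrite eq_sym oner_eq0.
have thmu : th <= mu by apply: hth; apply/eigenvalueP; exists m.
by apply: le_trans (h1 v); rewrite ler_wpM2r // nr_ge0.
Qed.


End Spec.
Arguments qf {R n}. Arguments nr {R n}. Arguments spec {R n}. Arguments polyf_cont {R n d g}.
Arguments qfD {R n}. Arguments nr_ge0 {R n}.



Section MainS.
Variables (R : realType) (n : nat).
Notation V := 'rV[R]_n.
Notation e := (basis_vec R).

Lemma polyf_pow (i : 'I_n) k : polyf k (fun x : V => x 0 i ^+ k).
Proof.
elim: k => [|k IH].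
  have -> : (fun x : V => x 0 i ^+ 0) = fun _ => 1 by apply/funext => x; rewrite expr0.
  exact: PolyC.
have -> : (fun x : V => x 0 i ^+ k.+1) = fun x => x 0 i * x 0 i ^+ k.
  by apply/funext => x; rewrite exprS.
apply: (PolyM (d1 := 1) (d2 := k)) => //; exact: PolyX.
Qed.

Lemma polyf_prod (m : 'I_n -> nat) (s : seq 'I_n) :
  polyf (\sum_(i <- s) m i) (fun x : V => \prod_(i <- s) x 0 i ^+ m i).
Proof.
elim: s => [|a s IH].
  have -> : (fun x : V => \prod_(i <- [::]) x 0 i ^+ m i) = fun _ => 1.
    by apply/funext => x; rewrite big_nil.
  exact: PolyC.
have -> : (fun x : V => \prod_(i <- a :: s) x 0 i ^+ m i) =
    fun x => x 0 a ^+ m a * \prod_(i <- s) x 0 i ^+ m i.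
  by apply/funext => x; rewrite big_cons.
rewrite big_cons; apply: (PolyM (polyf_pow a (m a)) IH) => //.
Qed.

Lemma polyf_sumT d (I : Type) (s : seq I) (F : I -> V -> R) :
  (forall k, polyf d (F k)) -> polyf d (fun y => \sum_(k <- s) F k y).
Proof.
move=> PF; elim: s => [|a s IH].
  have -> : (fun y : V => \sum_(k <- [::]) F k y) = fun _ => 0.
    by apply/funext => y; rewrite big_nil.
  exact: PolyC.
have -> : (fun y : V => \sum_(k <- a :: s) F k y) =
    fun y => F a y + \sum_(k <- s) F k y.
  by apply/funext => y; rewrite big_cons.
exact: PolyD.
Qed.

Lemma polyf_of_deg4 (f : V -> R) : poly_deg_le4 f -> polyf 4 f.
Proof.
case=> c [hc hf].
have -> : f = fun x => \sum_(m : {ffun 'I_n -> 'I_5}) c m * \prod_i x 0 i ^+ m i.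
  by apply/funext => x; exact: hf.
apply: polyf_sumT => m.
case: (leqP (\sum_i (m i : nat)) 4) => hm.
  apply: (PolyM (d1 := 0) (d2 := \sum_i (m i : nat))) => //.
    exact: PolyC.
  exact: (polyf_prod (fun i => (m i : nat)) (index_enum _)).
have -> : (fun x : V => c m * \prod_i x 0 i ^+ m i) = fun _ => 0.
  by apply/funext => x; rewrite hc // mul0r.
exact: PolyC.
Qed.

Lemma Dv_sum d (v : V) (s : seq 'I_n) (F : 'I_n -> V -> R) :
  (forall k, polyf d (F k)) ->
  Dv v (fun y => \sum_(k <- s) F k y) = fun y => \sum_(k <- s) Dv v (F k) y.
Proof.
move=> PF; elim: s => [|a s IH].
  have -> : (fun y : V => \sum_(k <- [::]) F k y) = fun _ => 0.
    by apply/funext => y; rewrite big_nil.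
  by rewrite DvC; apply/funext => y; rewrite big_nil.
have -> : (fun y : V => \sum_(k <- a :: s) F k y) =
    fun y => F a y + \sum_(k <- s) F k y.
  by apply/funext => y; rewrite big_cons.
rewrite (DvD v (PF a) (polyf_sum s F PF)) IH.
by apply/funext => y; rewrite big_cons.
Qed.

Lemma hessE (g : V -> R) x i j : hessian g x i j = Dv (e i) (Dv (e j) g) x.
Proof. by rewrite mxE. Qed.

Lemma partial2E (g : V -> R) k : partial2 k k g = iter 2 (Dv (e k)) g.
Proof. by apply/funext. Qed.

Lemma qf_lin (A C : 'M[R]_n) (b : R) (w : V) : qf (A + b *: C) w = qf A w + b * qf C w.
Proof. by rewrite /qf mulmxDr mulmxDl -scalemxAr -scalemxAl !mxE. Qed.

End MainS.
Arguments Dv_sum {R n d}. Arguments hessE {R n}. Arguments partial2E {R n}. Arguments qf_lin {R n}.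
Arguments polyf_of_deg4 {R n}.

Theorem theorem2 (R : realType) (n : nat) (f : 'rV[R]_n -> R)
  (C : 'M[R]_n) (lamC L theta : R) :
  poly_deg_le4 f ->
  (forall x : 'rV[R]_n, C = \sum_i hessian (partial2 i i f) x) ->
  smallest_eig C lamC -> 0 < lamC ->
  0 < L ->
  (exists2 x0 : 'rV[R]_n, eucl_norm x0 <= L & smallest_eig (hessian f x0) theta) ->
  (forall x : 'rV[R]_n, eucl_norm x <= L ->
     forall a, eigenvalue (hessian f x) a -> theta <= a) ->
  forall (x : 'rV[R]_n) (t : R),
    eucl_norm x <= L ->
    Num.sqrt (6 * `|theta| / lamC) < t ->
    psd (hessian (fun y => steklov f y t) x).
Proof.
move=> hpoly hC hCeig lamC0 L0 _ hth x t hx ht.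
have Pf := polyf_of_deg4 f hpoly.
have t0 : 0 < t by apply: le_lt_trans ht; exact: sqrtr_ge0.
pose s := rev (enum 'I_n).
have us : uniq s by rewrite rev_uniq enum_uniq.
have [c hc] := iter_int_formula t s t0 us f Pf.
pose b := t ^+ 2 / 6.
pose S := fun y => \sum_(k <- s) iter 2 (Dv (basis_vec R k)) f y.
have PS : polyf 2 S := polyf_sum s _ (fun k => polyf_iter (basis_vec R k) 2 Pf).
have Emu : (fun y => steklov f y t) = fun y => 1 * f y + b * S y + c.
  apply/funext => y; rewrite /steklov hc upd_same size_rev size_enum_ord mulKf ?mul1r //.
  by rewrite expf_neq0 // mulf_neq0 // gt_eqF.
have EH : hessian (fun y => steklov f y t) x = hessian f x + b *: C.
  apply/matrixP => i j; rewrite hessE Emu.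
  rewrite (DvL (basis_vec R j) 1 b c Pf (polyf_le (d':=4) PS isT)).
  rewrite (DvL (basis_vec R i) 1 b 0 (polyf_Dv (basis_vec R j) Pf)
     (polyf_le (d':=3) (polyf_Dv (basis_vec R j) PS) isT)).
  rewrite /S (Dv_sum (basis_vec R j) s _ (fun k => polyf_iter (basis_vec R k) 2 Pf)).
  rewrite (Dv_sum (basis_vec R i) s _ (fun k => polyf_Dv (basis_vec R j) (polyf_iter (basis_vec R k) 2 Pf))).
  rewrite (hC x) !mxE summxE mul1r addr0.
  under [in RHS]eq_bigr => k _ do rewrite mxE partial2E.
  rewrite /s big_rev big_enum /=.
  by congr (_ + _ * _); apply: eq_bigl => k; rewrite inE.
rewrite EH => v.
change (0 <= qf (hessian f x + b *: C) v); rewrite qf_lin.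
have symH : (hessian f x)^T = hessian f x.
  apply/matrixP => i j; rewrite mxE !hessE.
  by rewrite (Dv_comm _ _ Pf).
have symC : C^T = C.
  rewrite (hC x); apply/matrixP => i j; rewrite mxE !summxE; apply: eq_bigr => k _.
  by rewrite !hessE partial2E (Dv_comm _ _ (polyf_iter (basis_vec R k) 2 Pf)).
have hH := spec (hessian f x) theta symH (hth x hx) v.
have hCq := spec C lamC symC hCeig.2 v.
have N0 := nr_ge0 v.
have b0 : 0 <= b by rewrite /b divr_ge0 // sqr_ge0.
have a0 : 0 <= 6 * `|theta| / lamC by rewrite divr_ge0 // ?mulr_ge0 // ltW.
have ha : 6 * `|theta| / lamC < t ^+ 2.
  rewrite -(sqr_sqrtr a0).
  have := sqrtr_ge0 (6 * `|theta| / lamC); nra.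
have hb : `|theta| < b * lamC.
  rewrite ltr_pdivrMr // in ha; rewrite /b; lra.
have hth0 : - theta <= `|theta| by rewrite -normrN ler_norm.
have key : 0 <= (theta + b * lamC) * nr v by apply: mulr_ge0 => //; lra.
have hbC : b * (lamC * nr v) <= b * qf C v by rewrite ler_wpM2l.
nra.
Qed.
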